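(* Consider the model and approximate SIR in the context with perfect coordination $p=0$ (so $\Omega=0$ almost surely) and $q\in(0,1]$. Then $$\mathbb{P}\left(\widetilde{\mathsf{SIR}}_L\ge\frac{\beta}{\gamma}\right)=1-\sum_{\ell=0}^{L-1}e^{-\frac{\alpha-2}{2q\beta/\gamma}}\frac{\left(\frac{\alpha-2}{2q\beta/\gamma}\right)^\ell}{\ell!}.$$
   Context: Let $\Phi$ be a homogeneous Poisson point process on $\mathbb{R}^2$ of intensity $\lambda>0$ (base station locations), user at the origin $o$; label the points in increasing distance as $x_1,x_2,\dots$ and set $R_L=\|x_L\|$ for a fixed integer $L\ge1$. Fix $\alpha>2$, $\gamma>0$, $\beta>0$, $q\in(0,1]$. With all other participating BSs silent, the approximate (interference-limited) SIR of the $L$-th BS, in which the interference from BSs beyond $x_L$ (each active with probability $q$) is replaced by its conditional mean given $R_L$, is $\widetilde{\mathsf{SIR}}_L=\frac{R_L^{-\alpha}}{\frac{2\pi q\lambda}{\alpha-2}R_L^{2-\alpha}}$. *)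

(* Defs.v *)
From HB Require Import structures.
From mathcomp Require Import all_boot all_order all_algebra.
From mathcomp Require Import all_classical all_reals all_analysis.
Set Implicit Arguments. Unset Strict Implicit. Unset Printing Implicit Defensive.
Import Order.TTheory GRing.Theory Num.Theory.
Import numFieldNormedType.Exports.
Local Open Scope classical_set_scope.
Local Open Scope ring_scope.

Section PPP.
Variable R : realType.

Definition leb2 := (@lebesgue_measure R \x @lebesgue_measure R)%E.

Definition eball (r : R) : set (R * R) :=
  [set x | x.1 ^+ 2 + x.2 ^+ 2 <= r ^+ 2].

Definition bounded2 (A : set (R * R)) : Prop :=
  exists M : R, forall x, A x -> x.1 ^+ 2 + x.2 ^+ 2 <= M.

(* N w A = number of points of the realisation w of the point process in A. *)
Definition is_hPPP (d : measure_display) (Omega : measurableType d)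
    (P : probability Omega R) (lam : R) (N : Omega -> set (R * R) -> nat) : Prop :=
  [/\ (forall A k, measurable A -> bounded2 A ->
         measurable [set w | N w A = k]),
      (forall w A B, measurable A -> measurable B -> bounded2 A -> bounded2 B ->
         A `&` B = set0 -> N w (A `|` B) = (N w A + N w B)%N),
      (forall A k, measurable A -> bounded2 A ->
         let m := lam * fine (leb2 A) in
         P [set w | N w A = k] = (expR (- m) * m ^+ k / (k`!)%:R)%:E) &
      (forall (n : nat) (A : 'I_n -> set (R * R)) (k : 'I_n -> nat),
         (forall i, measurable (A i) /\ bounded2 (A i)) ->
         (forall i j, i != j -> A i `&` A j = set0) ->
         P (\bigcap_(i in [set: 'I_n]) [set w | N w (A i) = k i]) =
         (\prod_(i < n) P [set w | N w (A i) = k i])%E)].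

Definition RL (d : measure_display) (Omega : measurableType d)
    (N : Omega -> set (R * R) -> nat) (L : nat) (w : Omega) : R :=
  inf [set r : R | 0 <= r /\ (L <= N w (eball r))%N].

Definition SIRt (alpha q lam RL_w : R) : R :=
  RL_w `^ (- alpha) / ((2 * pi * q * lam / (alpha - 2)) * RL_w `^ (2 - alpha)).

End PPP.

(* Main.v *)
Require Import Defs.
From HB Require Import structures.
From mathcomp Require Import all_boot all_order all_algebra.
From mathcomp Require Import all_classical all_reals all_analysis.
From mathcomp Require Import measurable_realfun.
From mathcomp Require Import lra ring.
Import Order.TTheory GRing.Theory Num.Theory.
Import numFieldNormedType.Exports.
Local Open Scope classical_set_scope.
Local Open Scope ring_scope.

Section A.
Variable R : realType.
Lemma le_oppr_ge0_eq0 (s : R) : s <= - s -> 0 <= s -> s = 0.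
Proof. move=> h1 h2; lra. Qed.

Lemma sec_meas (r x : R) :
  lebesgue_measure (xsection (eball r) x) = (2 * Num.sqrt (r ^+ 2 - x ^+ 2))%:E.
Proof.
have [c0|c0] := leP 0 (r ^+ 2 - x ^+ 2).
  set s : R := Num.sqrt (r ^+ 2 - x ^+ 2).
  have -> : xsection (eball r) x = [set` `[- s, s]].
    apply/seteqP; split => y /=; rewrite /xsection /eball /= in_itv /= -ler_norml;
    rewrite inE /= -sqrtr_sqr /s ler_sqrt // lerBrDl addrC //.
  rewrite lebesgue_measure_itv /= lte_fin.
  have [s0|s0] := ltP (- s) s.
    by rewrite -EFinB opprK -mulr2n mulr_natl.
  have h0 : 0 <= s by apply: sqrtr_ge0.
  have -> : s = 0.
    exact: le_oppr_ge0_eq0.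
  by rewrite mulr0.
rewrite ler0_sqrtr ?ltW // mulr0.
have -> : xsection (eball r) x = set0; last by rewrite measure0.
apply/seteqP; split => y //=; rewrite /xsection /eball /= inE /= => h.
have : r ^+ 2 - x ^+ 2 >= y ^+ 2 by lra.
by move/(le_trans (sqr_ge0 y)); rewrite leNgt c0.
Qed.
Lemma der_cont (f : R -> R) x : derivable f x 1 -> {for x, continuous f}.
Proof. by move=> h; apply: differentiable_continuous; apply/derivable1_diffP. Qed.

Lemma sqr_lt (r y : R) : 0 <= r -> r < y -> r ^+ 2 < y ^+ 2.
Proof. move=> h1 h2; nra. Qed.

Lemma leb2_eq (r : R) : leb2 (eball r) =
  (\int[lebesgue_measure]_x ((2 * Num.sqrt (r ^+ 2 - x ^+ 2))%R)%:E)%E.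
Proof. by rewrite /leb2 /product_measure1 /=; apply: eq_integral => x _; exact: sec_meas. Qed.

Lemma leb2_eq2 (r : R) : 0 <= r -> leb2 (eball r) =
  (\int[lebesgue_measure]_(x in `[(- r)%R, r]) ((2 * Num.sqrt (r ^+ 2 - x ^+ 2))%R)%:E)%E.
Proof.
move=> r0; rewrite leb2_eq [RHS]integral_mkcond; apply: eq_integral => x _.
rewrite patchE; case: ifPn => // /negP; rewrite inE /= in_itv /= => h.
rewrite ler0_sqrtr ?mulr0 //.
have : r < `|x| by rewrite ltNge ler_norml; apply/negP => h'; apply: h.
move=> rx; rewrite subr_le0 -real_normK ?num_real //; apply: ltW.
rewrite ger0_norm // -[x ^+ 2]real_normK ?num_real //; exact: sqr_lt.
Qed.
Lemma integrand (r t : R) : 0 < r -> 0 <= cos t ->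
  (2 * Num.sqrt (r ^+ 2 - (r * sin t) ^+ 2)) * (r * cos t) = 2 * r ^+ 2 * cos t ^+ 2.
Proof.
move=> r0 c0.
have -> : r ^+ 2 - (r * sin t) ^+ 2 = (r * cos t) ^+ 2.
  by rewrite !exprMn cos2sin2 mulrBr mulr1.
rewrite sqrtr_sqr ger0_norm; last by rewrite mulr_ge0 // ltW.
rewrite !expr2; ring.
Qed.

Lemma derH (r t : R) :
  r ^+ 2 * (1 + (cos t * cos t + sin t * - sin t)) = 2 * r ^+ 2 * cos t ^+ 2.
Proof. by rewrite mulrN -!expr2 sin2cos2; ring. Qed.

Lemma area (r : R) : 0 < r -> leb2 (eball r) = (pi * r ^+ 2)%:E.
Proof.
move=> r0; rewrite leb2_eq2 ?ltW //.
pose F := fun t : R => r * sin t.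
pose G := fun x : R => 2 * Num.sqrt (r ^+ 2 - x ^+ 2).
have Fa : F (- (pi/2)) = - r by rewrite /F sinN sin_pihalf mulrN1.
have Fb : F (pi/2) = r by rewrite /F sin_pihalf mulr1.
have dF (t : R) : is_derive t (1 : R) F (r * cos t).
  by rewrite /F; apply: is_derive_eq.
have F' : derive1 F = fun t => r * cos t.
  by apply/funext => t; rewrite derive1E derive_val.
have pi2 : 0 < pi / 2 :> R by rewrite divr_gt0 // pi_gt0.
have ccos : continuous (fun t : R => r * cos t).
  by move=> t; apply: der_cont; apply: ex_derive.
have cG : continuous G.
  move=> x; rewrite /G.
  have -> : (fun x => 2 * Num.sqrt (r ^+ 2 - x ^+ 2)) =
     (fun y : R => 2 * y) \o (Num.sqrt \o (fun x : R => r ^+ 2 - x ^+ 2)) by [].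
  apply: continuous_comp; last by apply: der_cont; apply: ex_derive.
  apply: continuous_comp; last exact: sqrt_continuous.
  by apply: der_cont; apply: ex_derive.
have := @integration_by_substitution_increasing R F G (- (pi/2)) (pi/2).
rewrite Fa Fb => ->; last first.
- exact: continuous_subspaceT.
- split.
  + by move=> x _; apply: ex_derive.
  + by apply: cvg_at_right_filter; apply: der_cont; apply: ex_derive.
  + by apply: cvg_at_left_filter; apply: der_cont; apply: ex_derive.
- by rewrite F'; apply/cvg_ex; eexists; apply: cvg_at_left_filter; apply: ccos.
- by rewrite F'; apply/cvg_ex; eexists; apply: cvg_at_right_filter; apply: ccos.
- by rewrite F' => x _; apply: ccos.
- by move=> x y hx hy xy; rewrite /F ltr_pM2l // (ltr_sin hx hy).
- by rewrite -subr_ge0 opprK -mulr2n mulrn_wge0 // ltW.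
rewrite F'.
transitivity (\int[lebesgue_measure]_(x in `[(- (pi / 2))%R, (pi / 2)%R])
   ((2 * r ^+ 2 * cos x ^+ 2)%R)%:E)%E.
  apply: eq_integral => t; rewrite inE /= in_itv /= => ht.
  have c0 : 0 <= cos t by apply: cos_ge0_pihalf.
  by congr (_%:E); exact: integrand.
pose H := fun t : R => r ^+ 2 * (t + cos t * sin t).
have dH (t : R) : is_derive t (1 : R) H (2 * r ^+ 2 * cos t ^+ 2).
  by rewrite /H; apply: is_derive_eq; exact: derH.
rewrite (@continuous_FTC2 _ _ H).
- rewrite -EFinB /H cosN cos_pihalf !mul0r !addr0; congr (_%:E).
  by field.
- by rewrite -subr_gt0 opprK -mulr2n mulrn_wgt0.
- by apply: continuous_subspaceT => x; apply: der_cont; apply: ex_derive.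
- split.
  + by move=> x _; apply: ex_derive.
  + by apply: cvg_at_right_filter; apply: der_cont; apply: ex_derive.
  + by apply: cvg_at_left_filter; apply: der_cont; apply: ex_derive.
- by move=> x _; rewrite derive1E derive_val.
Qed.
Lemma SIRt_pos (alpha q lam rho : R) : 0 < rho -> 2 < alpha -> 0 < q -> 0 < lam ->
  SIRt alpha q lam rho = ((2 * pi * q * lam / (alpha - 2)) * rho ^+ 2)^-1.
Proof.
move=> r0 a2 q0 l0; rewrite /SIRt.
have -> : rho `^ (- alpha) = rho `^ (2 - alpha) * rho `^ (- 2).
  rewrite -powRD; last by apply/implyP => _; rewrite gt_eqF.
  by congr (_ `^ _); ring.
rewrite [rho `^ (- 2)]powRN (powR_mulrn 2 (ltW r0)).
have h1 : rho `^ (2 - alpha) != 0 by rewrite gt_eqF // powR_gt0.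
have h2 : rho != 0 by rewrite gt_eqF.
have h3 : alpha - 2 != 0 by rewrite gt_eqF // subr_gt0.
have h4 : pi != 0 :> R by rewrite gt_eqF // pi_gt0.
have h5 : q != 0 by rewrite gt_eqF.
have h6 : lam != 0 by rewrite gt_eqF.
move: h4; move: (@pi R) => p h4.
by field; rewrite h1 h2 h3 h4 h5 h6 /=; rewrite ?pnatr_eq0.
Qed.

Lemma SIRt_0 (alpha q lam : R) : 0 < alpha -> SIRt alpha q lam 0 = 0.
Proof. by move=> a0; rewrite /SIRt powR0 ?mul0r // oppr_eq0 gt_eqF. Qed.

Section infS.
Variable S : set R.
Hypothesis S0 : forall s, S s -> 0 <= s.
Hypothesis Sup : forall s s', S s -> s <= s' -> S s'.

Lemma inf_ge0 : 0 <= inf S.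
Proof.
have [->|ne] := eqVneq S set0; first by rewrite inf0.
apply: lb_le_inf; first by apply/set0P.
by move=> s /S0.
Qed.

Lemma small_inv (e : R) : 0 < e -> exists n : nat, (n.+1%:R)^-1 < e.
Proof.
move=> e0; exists (Num.Def.trunc (e^-1)).
rewrite invf_plt ?posrE ?ltr0n //.
exact: truncnS_gt.
Qed.

Lemma le_lim (x a : R) : (forall n : nat, x <= a + (n.+1%:R)^-1) -> x <= a.
Proof.
move=> h; rewrite leNgt; apply/negP => ax.
have [n hn] : exists n : nat, (n.+1%:R)^-1 < x - a by apply: small_inv; rewrite subr_gt0.
have hh := h n; move: hn hh; move: (n.+1%:R^-1) => i hn hh.
have : x < x by lra.
by rewrite ltxx.
Qed.

Lemma infS_le (a : R) : 0 <= a ->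
  (S !=set0 /\ inf S <= a) <-> (forall n : nat, S (a + (n.+1%:R)^-1)).
Proof.
move=> a0; split.
  move=> [ne ia] n.
  have hi : has_inf S by split => //; exists 0 => s /S0.
  have ip : 0 < (n.+1%:R^-1 : R) by rewrite invr_gt0 ltr0n.
  have [s Ss hs] := @inf_adherent _ _ (n.+1%:R^-1) ip hi.
  apply: Sup Ss _; apply: ltW; apply: (lt_le_trans hs); by rewrite lerD2r.
move=> h; split; first by exists (a + 1%:R^-1); apply: h 0%N.
apply: le_lim => n; apply: ge_inf => //; by exists 0 => s /S0.
Qed.
End infS.
Lemma eball_meas (r : R) : measurable (eball r).
Proof.
rewrite /eball.
have mf : measurable_fun setT (fun x : R * R => x.1 ^+ 2 + x.2 ^+ 2).
  apply: measurable_funD; apply: measurable_funX.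
    exact: measurable_fst.
  exact: measurable_snd.
have := mf measurableT [set` `]-oo, r ^+ 2]] (measurable_itv _).
rewrite setTI; congr measurable; apply/seteqP; split => x /=; by rewrite in_itv.

Qed.

Lemma sqr_le (r s : R) : 0 <= r -> r <= s -> r ^+ 2 <= s ^+ 2.
Proof. move=> h1 h2; nra. Qed.

Lemma eball_b (r : R) : bounded2 (eball r).
Proof. by exists (r ^+ 2). Qed.

Lemma eball_sub (r s : R) : 0 <= r -> r <= s -> eball r `<=` eball s.
Proof. move=> h1 h2 x; rewrite /eball /= => h; have := @sqr_le r s h1 h2; lra. Qed.

Lemma ann_b (r s : R) : bounded2 (eball s `\` eball r).
Proof. by exists (s ^+ 2) => x []. Qed.

Lemma ann_meas (r s : R) : measurable (eball s `\` eball r).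
Proof. by apply: measurableD; exact: eball_meas. Qed.

Lemma leb2_fin (r : R) : 0 < r -> fine (leb2 (eball r)) = pi * r ^+ 2.
Proof. by move=> r0; rewrite area. Qed.

Lemma leb2_ann (r s : R) : 0 < r -> r <= s ->
  fine (leb2 (eball s `\` eball r)) = pi * (s ^+ 2 - r ^+ 2).
Proof.
move=> r0 rs.
have h := @measureU _ _ _ (@leb2 R) (eball r) (eball s `\` eball r)
  (eball_meas r) (ann_meas r s) (setDIK _ _).
rewrite setDUK in h; last exact: eball_sub (ltW r0) rs.
have s0 : 0 < s by exact: lt_le_trans rs.
have h' : (pi * s ^+ 2)%:E = (pi * r ^+ 2)%:E + leb2 (eball s `\` eball r).
  by rewrite -(@area s s0) -(@area r r0); exact: h.
move: h'; case: (leb2 _) => [x||] //= /eqP; rewrite ?EFinD eqe => /eqP hx.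
by apply: (@addrI _ (pi * r ^+ 2)); rewrite /= -hx; ring.
Qed.
Lemma bigU_P (T : Type) (F : nat -> set T) n x :
  (\big[setU/set0]_(k < n) F k) x <-> exists2 k, (k < n)%N & F k x.
Proof.
rewrite -bigcup_mkord; split; first by move=> [k /= kn h]; exists k.
by move=> [k kn h]; exists k.
Qed.

Lemma ineq_help (a b c u : R) : 0 < a -> 0 < b -> 0 < c -> 0 < u ->
  (a / b <= (c * u)^-1) = (u <= b / (a * c)).
Proof.
move=> a0 b0 c0 u0.
rewrite -[(c * u)^-1]mul1r ler_pdivlMr ?mulr_gt0 // mulrAC ler_pdivrMr // mul1r.
by rewrite ler_pdivlMr ?mulr_gt0 // [u * _]mulrC mulrA.
Qed.

Lemma SIR_iff (alpha q lam beta gamma rho : R) : 2 < alpha -> 0 < q -> 0 < lam ->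
  0 < beta -> 0 < gamma -> 0 <= rho ->
  (beta / gamma <= SIRt alpha q lam rho) <->
  (0 < rho /\ rho <= Num.sqrt (gamma / (beta * (2 * pi * q * lam / (alpha - 2))))).
Proof.
move=> a2 q0 l0 b0 g0; rewrite le_eqVlt => /predU1P [<-|r0].
  rewrite SIRt_0; last by apply: lt_trans a2.
  split; last by case; rewrite ltxx.
  by rewrite leNgt divr_gt0.
have c0 : 0 < 2 * pi * q * lam / (alpha - 2).
  by rewrite divr_gt0 ?subr_gt0 // !mulr_gt0 // pi_gt0.
rewrite SIRt_pos // ineq_help ?exprn_gt0 //.
rewrite -(ler_sqrt _ (ltW (divr_gt0 g0 (mulr_gt0 b0 c0)))) sqrtr_sqr ger0_norm; last exact: ltW r0.
by split; [move=> h; split | case].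
Qed.
Section PP.
Variables (d : measure_display) (Omega : measurableType d) (P : probability Omega R).
Variables (lam : R) (N : Omega -> set (R * R) -> nat).
Hypothesis lam0 : 0 < lam.
Hypothesis hP : is_hPPP P lam N.

Lemma Nmeas A k : measurable A -> bounded2 A -> measurable [set w | N w A = k].
Proof. by case: hP => h _ _ _; apply: h. Qed.

Lemma Nadd w A B : measurable A -> measurable B -> bounded2 A -> bounded2 B ->
  A `&` B = set0 -> N w (A `|` B) = (N w A + N w B)%N.
Proof. by case: hP => _ h _ _; apply: h. Qed.

Lemma Npois A k : measurable A -> bounded2 A ->
  P [set w | N w A = k] = (expR (- (lam * fine (leb2 A))) *
     (lam * fine (leb2 A)) ^+ k / (k`!)%:R)%:E.
Proof. by case: hP => _ _ h _; apply: h. Qed.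

Lemma Ndec w (r s : R) : 0 <= r -> r <= s ->
  N w (eball s) = (N w (eball r) + N w (eball s `\` eball r))%N.
Proof.
move=> r0 rs; rewrite -{1}(setDUK (@eball_sub r s r0 rs)).
apply: Nadd; [exact: eball_meas|exact: ann_meas|exact: eball_b|exact: ann_b|exact: setDIK].
Qed.

Lemma Nmono w (r s : R) : 0 <= r -> r <= s -> (N w (eball r) <= N w (eball s))%N.
Proof. by move=> r0 rs; rewrite (@Ndec w r s r0 rs) leq_addr. Qed.

Lemma geq_meas A k : measurable A -> bounded2 A ->
  measurable [set w | (k <= N w A)%N].
Proof.
move=> mA bA.
have -> : [set w | (k <= N w A)%N] = \bigcup_i [set w | N w A = (i + k)%N].
  apply/seteqP; split => w /=.
    by move=> h; exists (N w A - k)%N => //; rewrite subnK.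
  by move=> [i _ ->]; rewrite leq_addl.
by apply: bigcupT_measurable => i; exact: Nmeas.
Qed.

Lemma P_ge1 A : measurable A -> bounded2 A ->
  (P [set w | (1 <= N w A)%N] <= (lam * fine (leb2 A))%:E)%E.
Proof.
move=> mA bA.
have -> : [set w | (1 <= N w A)%N] = ~` [set w | N w A = 0%N].
  apply/seteqP; split => w /=; by rewrite lt0n => /eqP.
rewrite probability_setC; last exact: Nmeas.
rewrite Npois // expr0 mulr1 divr1 -EFinB lee_fin.
have := expR_ge1Dx (- (lam * fine (leb2 A))); lra.
Qed.

Lemma P_geL A (L : nat) : measurable A -> bounded2 A ->
  P [set w | (L <= N w A)%N] = (1 - \sum_(l < L) expR (- (lam * fine (leb2 A))) *
     (lam * fine (leb2 A)) ^+ l / (l`!)%:R)%:E.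
Proof.
move=> mA bA.
have -> : [set w | (L <= N w A)%N] =
    ~` \big[setU/set0]_(k < L) [set w | N w A = k].
  apply/seteqP; split => w /=.
    move=> h /(@bigU_P _ (fun k => [set w | N w A = k])) [k kL hk].
    by move: h; rewrite hk leqNgt kL.
  move=> h; rewrite leqNgt; apply/negP => hL; apply: h.
  by apply/(@bigU_P _ (fun k => [set w | N w A = k])); exists (N w A).
rewrite probability_setC; last first.
  by apply: bigsetU_measurable => k _; exact: Nmeas.
rewrite (@measure_bigsetU _ _ _ P (fun k => [set w | N w A = k])); last first.
- move=> i j _ _ [w /= [-> ->]] //.
- by move=> k; exact: Nmeas.
rewrite (eq_bigr (fun k : 'I_L => (expR (- (lam * fine (leb2 A))) *
     (lam * fine (leb2 A)) ^+ k / (k`!)%:R)%:E)); last by move=> k _; rewrite /= Npois.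
by rewrite sumEFin -EFinB.
Qed.
Lemma null_eq (X Y Z : set Omega) : measurable X -> measurable Y -> measurable Z ->
  X `<=` Y -> Y `<=` X `|` Z -> P Z = 0%E -> P X = P Y.
Proof.
move=> mX mY mZ XY YXZ PZ; apply/eqP; rewrite eq_le; apply/andP; split.
  by apply: le_measure => //; rewrite inE.
apply: (@le_trans _ _ (P (X `|` Z))).
  by apply: le_measure => //; rewrite inE //; exact: measurableU.
apply: (le_trans (measureU2 P mX mZ)).
by rewrite [X in (_ + X <= _)%E](_ : _ = 0%E) ?adde0 //; exact: PZ.
Qed.

Lemma le_lim2 (y C : R) : 0 < C -> (forall n : nat, y <= C * (n.+1%:R)^-1) -> y <= 0.
Proof.
move=> C0 h; rewrite leNgt; apply/negP => y0.
have [n hn] : exists n : nat, (n.+1%:R)^-1 < y / C by apply: small_inv; rewrite divr_gt0.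
have hh := h n; move: hn hh; move: (n.+1%:R^-1) => i hn hh.
have : C * i < y by rewrite mulrC -ltr_pdivlMr.
by rewrite ltNge hh.
Qed.

Lemma null_lim (Z : set Omega) (C : R) : 0 < C ->
  (forall n : nat, (P Z <= (C * (n.+1%:R)^-1)%:E)%E) -> P Z = 0%E.
Proof.
move=> C0 h; apply/eqP; rewrite eq_le measure_ge0 andbT.
have := h 0%N; have := measure_ge0 P Z.
case: (P Z) h => [y||] // h _ _; rewrite lee_fin.
by apply: (@le_lim2 y C C0) => n; have := h n; rewrite lee_fin.
Qed.

Variables (L : nat) (alpha gamma beta q : R).
Hypotheses (hL : (1 <= L)%N) (a2 : 2 < alpha) (g0 : 0 < gamma) (b0 : 0 < beta)
  (q0 : 0 < q).

Let c := 2 * pi * q * lam / (alpha - 2).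
Let r0 := Num.sqrt (gamma / (beta * c)).
Let S w := [set r : R | 0 <= r /\ (L <= N w (eball r))%N].

Lemma c_gt0 : 0 < c.
Proof. by rewrite divr_gt0 ?subr_gt0 // !mulr_gt0 // pi_gt0. Qed.

Lemma r0_gt0 : 0 < r0.
Proof. by rewrite sqrtr_gt0 divr_gt0 // mulr_gt0 // c_gt0. Qed.

Lemma S0 w s : S w s -> 0 <= s.
Proof. by case. Qed.

Lemma Sup w s s' : S w s -> s <= s' -> S w s'.
Proof.
move=> [s0 h] ss'; split; first exact: le_trans ss'.
exact: (leq_trans h (@Nmono w s s' s0 ss')).
Qed.

Definition Bset := \bigcap_n [set w | (L <= N w (eball (r0 + (n.+1%:R)^-1)))%N].
Definition Zset := \bigcap_n [set w | (L <= N w (eball (0 + (n.+1%:R)^-1)))%N].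
Definition Aset := [set w | (L <= N w (eball r0))%N].

Lemma S_iff w (a : R) : 0 <= a ->
  (S w !=set0 /\ inf (S w) <= a) <->
  (\bigcap_n [set w | (L <= N w (eball (a + (n.+1%:R)^-1)))%N]) w.
Proof.
move=> a0; rewrite (@infS_le (S w) (@S0 w) (@Sup w) a a0); split.
  by move=> h n _; case: (h n).
move=> h n; split; last exact: h.
by rewrite addr_ge0 // invr_ge0 ler0n.
Qed.

Lemma E_eq : [set w | beta / gamma <= SIRt alpha q lam (RL N L w)] = Bset `\` Zset.
Proof.
have r00 : 0 <= r0 by apply: ltW; exact: r0_gt0.
rewrite /Bset /Zset; apply/seteqP; split => w /=; have -> : RL N L w = inf (S w) by [].
- move=> /(@SIR_iff alpha q lam beta gamma (inf (S w)) a2 q0 lam0 b0 g0 (@inf_ge0 (S w) (@S0 w))) [ip ir].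
  have ne : S w !=set0.
    by apply/set0P; apply/eqP => e; move: ip; rewrite e inf0 ltxx.
  split; first by apply: (proj1 (@S_iff w r0 r00)); split.
  by move=> /(proj2 (@S_iff w 0 (lexx 0))) [_ h0]; move: ip; rewrite ltNge h0.
- move=> [hB hZ]; have [ne ir] := proj2 (@S_iff w r0 r00) hB.
  apply/(@SIR_iff alpha q lam beta gamma (inf (S w)) a2 q0 lam0 b0 g0 (@inf_ge0 (S w) (@S0 w))); split => //.
  rewrite lt_neqAle (@inf_ge0 (S w) (@S0 w)) andbT.
  by apply/eqP => e; apply: hZ; apply: (proj1 (@S_iff w 0 (lexx 0))); split => //; rewrite -e.
Qed.

Lemma e_prop (n : nat) : 0 < (n.+1%:R)^-1 :> R /\ (n.+1%:R)^-1 <= 1 :> R.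
Proof. by split; [rewrite invr_gt0 ltr0n | rewrite invf_le1 ?ltr0n // ler1n]. Qed.

Lemma helper1 (k e : R) : 0 <= k -> 0 < e -> e <= 1 -> k * (e ^+ 2) <= k * e.
Proof. by move=> k0 e0 e1; rewrite ler_wpM2l //; nra. Qed.

Lemma helper2 (k r e : R) : 0 <= k -> 0 <= r -> 0 < e -> e <= 1 ->
  k * ((r + e) ^+ 2 - r ^+ 2) <= k * (2 * r + 1) * e.
Proof. by move=> k0 hr e0 e1; rewrite -mulrA ler_wpM2l //; nra. Qed.

Lemma main_pp : P [set w | beta / gamma <= SIRt alpha q lam (RL N L w)] =
  (1 - \sum_(l < L) expR (- (lam * fine (leb2 (eball r0)))) *
     (lam * fine (leb2 (eball r0))) ^+ l / (l`!)%:R)%:E.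
Proof.
have r0p := r0_gt0.
have r00 : 0 <= r0 by apply: ltW.
have pi0 : 0 < pi :> R by exact: pi_gt0.
have mB : measurable Bset.
  by apply: bigcapT_measurable => n; apply: geq_meas; [exact: eball_meas|exact: eball_b].
have mZ : measurable Zset.
  by apply: bigcapT_measurable => n; apply: geq_meas; [exact: eball_meas|exact: eball_b].
have mA : measurable Aset by apply: geq_meas; [exact: eball_meas|exact: eball_b].
have AB : Aset `<=` Bset.
  move=> w hA n _; apply: (leq_trans hA); apply: Nmono => //.
  by rewrite lerDl invr_ge0 ler0n.
have PZ : P Zset = 0%E.
  apply: (@null_lim _ (lam * pi)); first by rewrite mulr_gt0.
  move=> n; have [e0 e1] := e_prop n.
  have me := eball_meas (0 + (n.+1%:R)^-1); have be := eball_b (0 + (n.+1%:R)^-1).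
  apply: (le_trans (le_measure P _ _ _)).
  - by rewrite inE.
  - by rewrite inE; exact: (@geq_meas _ 1 me be).
  - by move=> w hw; apply: leq_trans hL (hw n I).
  apply: (le_trans (@P_ge1 _ me be)); rewrite lee_fin leb2_fin ?add0r //.
  have k0 : 0 <= lam * pi by apply: mulr_ge0; apply: ltW.
  by rewrite mulrA; exact: (@helper1 (lam * pi) _ k0 e0 e1).
have PBA : P (Bset `\` Aset) = 0%E.
  apply: (@null_lim _ (lam * pi * (2 * r0 + 1))).
    by rewrite !mulr_gt0 // ltr_wpDl // mulr_ge0.
  move=> n; have [e0 e1] := e_prop n.
  set e := (n.+1%:R)^-1 in e0 e1 *.
  have me := ann_meas r0 (r0 + e); have be := ann_b r0 (r0 + e).
  apply: (le_trans (le_measure P _ _ _)).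
  - by rewrite inE; exact: measurableD.
  - by rewrite inE; exact: (@geq_meas _ 1 me be).
  - move=> w [hw hA] /=; have := hw n I; rewrite /= (@Ndec w r0 (r0 + e) r00) ?lerDl ?ltW //.
    rewrite /Aset /= in hA; rewrite lt0n => hL'; apply/eqP => h0; apply: hA.
    by rewrite h0 addn0 in hL'.
  apply: (le_trans (@P_ge1 _ me be)); rewrite lee_fin (@leb2_ann r0 (r0 + e) r0p); last first.
    by rewrite lerDl ltW.
  have k0 : 0 <= lam * pi by apply: mulr_ge0; apply: ltW.
  by rewrite mulrA; exact: (@helper2 (lam * pi) r0 e k0 r00 e0 e1).
rewrite E_eq.
have mBZ : measurable (Bset `\` Zset) by exact: measurableD.
have mBA : measurable (Bset `\` Aset) by exact: measurableD.
rewrite (@null_eq (Bset `\` Zset) Bset Zset mBZ mB mZ); last 3 first.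
- by move=> w [].
- by move=> w hB; have [hZ|hZ] := pselect (Zset w); [right|left].
- exact: PZ.
rewrite -(@null_eq Aset Bset (Bset `\` Aset) mA mB mBA AB); last 2 first.
- by move=> w hB; have [hA|hA] := pselect (Aset w); [left|right].
- exact: PBA.
by rewrite P_geL //; [exact: eball_meas | exact: eball_b].
Qed.
End PP.
End A.

Lemma t_eq (R : realType) (lam alpha gamma beta q : R) : 0 < lam -> 2 < alpha ->
  0 < gamma -> 0 < beta -> 0 < q ->
  lam * fine (leb2 (eball (Num.sqrt (gamma / (beta * (2 * pi * q * lam / (alpha - 2))))))) =
  (alpha - 2) / (2 * q * beta / gamma).
Proof.
move=> l0 a2 g0 b0 q0.
have c0 : 0 < 2 * pi * q * lam / (alpha - 2).
  by rewrite divr_gt0 ?subr_gt0 // !mulr_gt0 // pi_gt0.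
rewrite leb2_fin; last by rewrite sqrtr_gt0 divr_gt0 // mulr_gt0.
rewrite sqr_sqrtr; last by rewrite ltW // divr_gt0 // mulr_gt0.
have h3 : alpha - 2 != 0 by rewrite gt_eqF // subr_gt0.
have h4 : pi != 0 :> R by rewrite gt_eqF // pi_gt0.
have h5 : q != 0 by rewrite gt_eqF.
have h6 : lam != 0 by rewrite gt_eqF.
have h7 : beta != 0 by rewrite gt_eqF.
have h8 : gamma != 0 by rewrite gt_eqF.
move: h4; move: (@pi R) => p h4.
by field; rewrite h3 h4 h5 h6 h7 h8 /= ?pnatr_eq0.
Qed.

Theorem proposition1 (R : realType) (d : measure_display) (Omega : measurableType d)
    (P : probability Omega R) (lam : R) (N : Omega -> set (R * R) -> nat)
    (L : nat) (alpha gamma beta q : R) :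
  0 < lam -> is_hPPP P lam N -> (1 <= L)%N ->
  2 < alpha -> 0 < gamma -> 0 < beta -> 0 < q -> q <= 1 ->
  let t := (alpha - 2) / (2 * q * beta / gamma) in
  P [set w | beta / gamma <= SIRt alpha q lam (RL N L w)] =
  (1 - \sum_(l < L) expR (- t) * t ^+ l / (l`!)%:R)%:E.
Proof.
move=> l0 hP hL a2 g0 b0 q0 q1 t.
rewrite (@main_pp R d Omega P lam N l0 hP L alpha gamma beta q hL a2 g0 b0 q0).
by rewrite /t (@t_eq R lam alpha gamma beta q l0 a2 g0 b0 q0).
Qed.
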